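(* Let $\mathcal{A}$ and $\mathcal{B}$ be quantum automata over the same alphabet $\Sigma$ and $a,b\in\mathbb{C}$ with $|a|^2+|b|^2=1$. Then for every $w\in\Sigma^\omega$: (1) $|a|^2f^{\mathrm{ND}}_{\mathcal{A}}(w)+|b|^2f^{\mathrm{ND}}_{\mathcal{B}}(w)\ge f^{\mathrm{ND}}_{a\mathcal{A}\oplus b\mathcal{B}}(w)\ge\max\{|a|^2f^{\mathrm{ND}}_{\mathcal{A}}(w),|b|^2f^{\mathrm{ND}}_{\mathcal{B}}(w)\}\ge f^{\mathrm{ND}}_{a\mathcal{A}\oplus b\mathcal{B}}(w)/2$; (2) $f^{\mathrm{ND}}_{\mathcal{A}\otimes\mathcal{B}}(w)\le f^{\mathrm{ND}}_{\mathcal{A}}(w)f^{\mathrm{ND}}_{\mathcal{B}}(w)$; (3) $f^{\mathrm{ND}}_{\mathcal{A}}(w)+f^{\mathrm{ND}}_{\mathcal{A}^\perp}(w)\ge1$, with equality if and only if $\lim_{n\to\infty}f^{\mathrm{MO}}_{\mathcal{A}}(w_n)$ exists.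
   Context: A quantum automaton is a tuple $\mathcal{A}=(\mathcal{H},|s_0\rangle,\Sigma,\{U_\sigma:\sigma\in\Sigma\},F)$ where $\mathcal{H}$ is a finite-dimensional complex Hilbert space, $|s_0\rangle$ a unit vector, $\Sigma$ a finite alphabet, each $U_\sigma$ unitary, and $F$ a subspace with projection $P_F$. For finite $x=\sigma_1\cdots\sigma_m$, $U_x=U_{\sigma_m}\cdots U_{\sigma_1}$ and $f^{\mathrm{MO}}_{\mathcal{A}}(x)=\|P_FU_x|s_0\rangle\|^2$. For $w\in\Sigma^\omega$ with prefixes $w_n$, the non-disturbing run is $|s_n\rangle=U_{w_n}|s_0\rangle$ and $f^{\mathrm{ND}}_{\mathcal{A}}(w)=\sup_{|\psi\rangle}\sup_{\{n_i\}}\inf_{i\ge1}|\langle\psi|s_{n_i}\rangle|^2$ over unit $|\psi\rangle\in F$ and strictly increasing $0\le n_1<n_2<\cdots$. Operations, for $\mathcal{A}=(\mathcal{H}^{\mathcal{A}},|s_0^{\mathcal{A}}\rangle,\Sigma,\{U^{\mathcal{A}}_\sigma\},F^{\mathcal{A}})$ and $\mathcal{B}=(\mathcal{H}^{\mathcal{B}},|s_0^{\mathcal{B}}\rangle,\Sigma,\{U^{\mathcal{B}}_\sigma\},F^{\mathcal{B}})$: the weighted direct sum $a\mathcal{A}\oplus b\mathcal{B}=(\mathcal{H}^{\mathcal{A}}\oplus\mathcal{H}^{\mathcal{B}},a|s_0^{\mathcal{A}}\rangle\oplus b|s_0^{\mathcal{B}}\rangle,\Sigma,\{U^{\mathcal{A}}_\sigma\oplus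 U^{\mathcal{B}}_\sigma\},F^{\mathcal{A}}\oplus F^{\mathcal{B}})$; the tensor product $\mathcal{A}\otimes\mathcal{B}=(\mathcal{H}^{\mathcal{A}}\otimes\mathcal{H}^{\mathcal{B}},|s_0^{\mathcal{A}}\rangle\otimes|s_0^{\mathcal{B}}\rangle,\Sigma,\{U^{\mathcal{A}}_\sigma\otimes U^{\mathcal{B}}_\sigma\},F^{\mathcal{A}}\otimes F^{\mathcal{B}})$; the ortho-complement $\mathcal{A}^\perp$ is $\mathcal{A}$ with $F$ replaced by its orthogonal complement $F^\perp$. *)

(* Defs.v *)
From HB Require Import structures.
From mathcomp Require Import all_boot all_order all_algebra.
From mathcomp Require Import complex mxtens.
From mathcomp Require Import classical_sets reals topology normedtype sequences.


Unset Strict Implicit.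
Unset Printing Implicit Defensive.

Import Order.TTheory GRing.Theory Num.Theory.
Local Open Scope ring_scope.
Local Open Scope classical_set_scope.

Section QA.
Variable R : realType.
Local Notation C := R[i].

Definition sqn (z : C) : R := complex.Re z ^+ 2 + complex.Im z ^+ 2.

Definition cconj (z : C) : C := Complex (complex.Re z) (- complex.Im z).
Definition adj {m n} (M : 'M[C]_(m, n)) : 'M[C]_(n, m) :=
  \matrix_(i, j) cconj (M j i).

Definition cinner {n} (u v : 'cV[C]_n) : C := \sum_i cconj (u i 0) * v i 0.
Definition vnorm2 {n} (v : 'cV[C]_n) : R := \sum_i sqn (v i 0).

(* A quantum automaton over alphabet S: Hilbert space C^dim, initial state,
   one matrix per letter, and the final subspace F given by its orthogonal
   projection P_F. *)
Record qaut (S : finType) := QAut {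
  qdim : nat;
  qs0 : 'cV[C]_qdim;
  qU : S -> 'M[C]_qdim;
  qP : 'M[C]_qdim }.
Arguments qdim {S}.
Arguments qs0 {S}.
Arguments qU {S}.
Arguments qP {S}.

Definition unitary {n} (M : 'M[C]_n) := adj M *m M = 1%:M.
Definition orth_proj {n} (P : 'M[C]_n) := adj P = P /\ P *m P = P.

Definition is_qaut {S : finType} (A : qaut S) :=
  vnorm2 (qs0 A) = 1 /\ (forall s, unitary (qU A s)) /\ orth_proj (qP A).

Definition inF {S : finType} (A : qaut S) (v : 'cV[C]_(qdim A)) :=
  qP A *m v = v.

(* U_x |v> for a finite word x = s1...sm : U_{sm} ... U_{s1} |v> *)
Definition run_word {S : finType} (A : qaut S) (x : seq S) (v : 'cV[C]_(qdim A)) :=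
  foldl (fun u s => qU A s *m u) v x.

Definition wprefix {S : finType} (w : nat -> S) (n : nat) : seq S := mkseq w n.

Definition fMO {S : finType} (A : qaut S) (x : seq S) : R :=
  vnorm2 (qP A *m run_word A x (qs0 A)).

Definition ndstate {S : finType} (A : qaut S) (w : nat -> S) (n : nat) :=
  run_word A (wprefix w n) (qs0 A).

Definition fND {S : finType} (A : qaut S) (w : nat -> S) : R :=
  sup [set r | exists (psi : 'cV[C]_(qdim A)) (ns : nat -> nat),
         [/\ vnorm2 psi = 1, inF A psi, {homo ns : i j / (i < j)%N} &
             r = inf [set sqn (cinner psi (ndstate A w (ns i))) | i in setT]]].

Definition qdsum {S : finType} (a b : C) (A B : qaut S) : qaut S :=
  @QAut S (qdim A + qdim B)
    (col_mx (a *: qs0 A) (b *: qs0 B))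
    (fun s => block_mx (qU A s) 0 0 (qU B s))
    (block_mx (qP A) 0 0 (qP B)).

(* tensor product A (x) B (Kronecker product; projection onto F^A (x) F^B
   is P_A (x) P_B) *)
Definition qtens {S : finType} (A B : qaut S) : qaut S :=
  @QAut S (qdim A * qdim B)
    (qs0 A *t qs0 B)
    (fun s => qU A s *t qU B s)
    (qP A *t qP B).

(* ortho-complement: F replaced by F^perp, whose projection is 1 - P_F *)
Definition qperp {S : finType} (A : qaut S) : qaut S :=
  @QAut S (qdim A) (qs0 A) (qU A) (1%:M - qP A).

End QA.
Arguments qdim {R S}.
Arguments qs0 {R S}.
Arguments qU {R S}.
Arguments qP {R S}.
Arguments sqn {R}.
Arguments cinner {R n}.
Arguments vnorm2 {R n}.
Arguments is_qaut {R S}.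
Arguments fMO {R S}.
Arguments fND {R S}.
Arguments qdsum {R S}.
Arguments qtens {R S}.
Arguments qperp {R S}.

(* Main.v *)
Require Import Defs.
From HB Require Import structures.
From mathcomp Require Import all_boot all_order all_algebra.
From mathcomp Require Import complex mxtens.
From mathcomp Require Import classical_sets reals topology normedtype sequences.
From mathcomp Require Import ring lra boolp.
Import Order.TTheory GRing.Theory Num.Theory numFieldNormedType.Exports.
Local Open Scope ring_scope.
Local Open Scope classical_set_scope.
Local Open Scope complex_scope.

Section Scal.
Variable R : realType.
Local Notation C := R[i].

Lemma cconjE (z : C) : cconj R z = (z^*)%C.
Proof. by case: z. Qed.

Lemma sqnE (z : C) : (sqn z)%:C = (z^*)%C * z.
Proof. case: z => a b; rewrite /sqn /=; simpc; congr (_ +i* _); ring. Qed.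

Lemma sqn_ge0 (z : C) : 0 <= sqn z.
Proof. by rewrite /sqn addr_ge0 // sqr_ge0. Qed.

Lemma sqnM (x y : C) : sqn (x * y) = sqn x * sqn y.
Proof. case: x => a b; case: y => c d; rewrite /sqn /=; simpc => /=; ring. Qed.

Lemma sqn_conj (x : C) : sqn (x^*)%C = sqn x.
Proof. case: x => a b; rewrite /sqn /=; ring. Qed.

Lemma sqn_real (r : R) : sqn (r%:C) = r ^+ 2.
Proof. rewrite /sqn /=; ring. Qed.

Lemma Re_sq_le (z : C) : complex.Re z ^+ 2 <= sqn z.
Proof. by rewrite /sqn lerDl sqr_ge0. Qed.

Lemma sqn_eq0 (z : C) : sqn z = 0 -> z = 0.
Proof.
case: z => a b; rewrite /sqn /= => H.
have ha : a ^+ 2 = 0 by apply/eqP; rewrite eq_le sqr_ge0 andbT -H lerDl sqr_ge0.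
have hb : b ^+ 2 = 0 by move: H; rewrite ha add0r.
by move/eqP: ha; rewrite sqrf_eq0 => /eqP ->; move/eqP: hb; rewrite sqrf_eq0 => /eqP ->.
Qed.


Lemma adjE m n (M : 'M[C]_(m, n)) : adj R M = (map_mx (@conjc R) M)^T.
Proof. by apply/matrixP => i j; rewrite !mxE cconjE. Qed.

Lemma adj_mul m n p (M : 'M[C]_(m, n)) (N : 'M[C]_(n, p)) :
  adj R (M *m N) = adj R N *m adj R M.
Proof. by rewrite !adjE map_mxM trmx_mul. Qed.

Lemma adjK m n (M : 'M[C]_(m, n)) : adj R (adj R M) = M.
Proof. by apply/matrixP => i j; rewrite !mxE !cconjE conjcK. Qed.

Lemma adjD m n (M N : 'M[C]_(m, n)) : adj R (M + N) = adj R M + adj R N.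
Proof. by apply/matrixP => i j; rewrite !mxE !cconjE rmorphD. Qed.

Lemma adjN m n (M : 'M[C]_(m, n)) : adj R (- M) = - adj R M.
Proof. by apply/matrixP => i j; rewrite !mxE !cconjE rmorphN. Qed.

Lemma adjZ m n (c : C) (M : 'M[C]_(m, n)) : adj R (c *: M) = (c^*)%C *: adj R M.
Proof. by apply/matrixP => i j; rewrite !mxE !cconjE rmorphM. Qed.

Lemma adj1 n : adj R (1%:M : 'M[C]_n) = 1%:M.
Proof. by rewrite adjE map_mx1 trmx1. Qed.

Lemma adj0 m n : adj R (0 : 'M[C]_(m, n)) = 0.
Proof. by apply/matrixP => i j; rewrite !mxE cconjE rmorph0. Qed.

Lemma adj_block m1 m2 n1 n2 (A : 'M[C]_(m1, n1)) (B : 'M[C]_(m1, n2))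
  (C' : 'M[C]_(m2, n1)) (D : 'M[C]_(m2, n2)) :
  adj R (block_mx A B C' D) = block_mx (adj R A) (adj R C') (adj R B) (adj R D).
Proof. by rewrite !adjE map_block_mx tr_block_mx. Qed.

Lemma adj_tens m n p q (A : 'M[C]_(m, n)) (B : 'M[C]_(p, q)) :
  adj R (A *t B) = adj R A *t adj R B.
Proof. by rewrite !adjE map_mxT trmx_tens. Qed.

Lemma cinnerE n (u v : 'cV[C]_n) : cinner u v = (adj R u *m v) 0 0.
Proof. by rewrite /cinner mxE; apply: eq_bigr => i _; rewrite mxE. Qed.

Lemma vnorm2E n (v : 'cV[C]_n) : (vnorm2 v)%:C = cinner v v.
Proof.
rewrite /vnorm2 /cinner rmorph_sum; apply: eq_bigr => i _.
by rewrite cconjE -sqnE.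
Qed.

Lemma vnorm2_ge0 n (v : 'cV[C]_n) : 0 <= vnorm2 v.
Proof. by apply: sumr_ge0 => i _; apply: sqn_ge0. Qed.

Lemma cinner_mull n m (M : 'M[C]_(m, n)) (u : 'cV[C]_n) (v : 'cV[C]_m) :
  cinner (M *m u) v = cinner u (adj R M *m v).
Proof. by rewrite !cinnerE adj_mul mulmxA. Qed.

Lemma cinner_conj n (u v : 'cV[C]_n) : cinner v u = ((cinner u v)^*)%C.
Proof.
rewrite /cinner rmorph_sum; apply: eq_bigr => i _.
by rewrite !cconjE -[RHS]/(((u i 0)^* * v i 0)^*)%C rmorphM /= conjcK mulrC.
Qed.

Lemma cinnerDr n (u v w : 'cV[C]_n) : cinner u (v + w) = cinner u v + cinner u w.
Proof. by rewrite !cinnerE mulmxDr mxE. Qed.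
Lemma cinnerDl n (u v w : 'cV[C]_n) : cinner (v + w) u = cinner v u + cinner w u.
Proof. by rewrite !cinnerE adjD mulmxDl mxE. Qed.
Lemma cinnerNr n (u v : 'cV[C]_n) : cinner u (- v) = - cinner u v.
Proof. by rewrite !cinnerE mulmxN mxE. Qed.
Lemma cinnerNl n (u v : 'cV[C]_n) : cinner (- v) u = - cinner v u.
Proof. by rewrite !cinnerE adjN mulNmx mxE. Qed.
Lemma cinnerZr n c (u v : 'cV[C]_n) : cinner u (c *: v) = c * cinner u v.
Proof. by rewrite !cinnerE -scalemxAr mxE. Qed.
Lemma cinnerZl n c (u v : 'cV[C]_n) : cinner (c *: v) u = (c^*)%C * cinner v u.
Proof. by rewrite !cinnerE adjZ -scalemxAl mxE. Qed.


Lemma rcB (x y : R) : (x - y)%:C = x%:C - y%:C :> C.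
Proof. by rewrite rmorphB. Qed.
Lemma rcD (x y : R) : (x + y)%:C = x%:C + y%:C :> C.
Proof. by rewrite rmorphD. Qed.
Lemma rcM (x y : R) : (x * y)%:C = x%:C * y%:C :> C.
Proof. by rewrite rmorphM. Qed.
Lemma rcV (x : R) : (x^-1)%:C = (x%:C)^-1 :> C.
Proof. by rewrite fmorphV. Qed.
Lemma cjM (x y : C) : ((x * y)^*)%C = (x^*)%C * (y^*)%C.
Proof. by rewrite rmorphM. Qed.
Lemma cjD (x y : C) : ((x + y)^*)%C = (x^*)%C + (y^*)%C.
Proof. by rewrite rmorphD. Qed.

Lemma vnorm2_eq0 {n} {v : 'cV[C]_n} : vnorm2 v = 0 -> v = 0.
Proof.
move=> /psumr_eq0P H; apply/matrixP => i j; rewrite (ord1 j) mxE.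
by apply: sqn_eq0; apply: H => // k _; apply: sqn_ge0.
Qed.

Lemma cinner0l n (v : 'cV[C]_n) : cinner 0 v = 0.
Proof. by rewrite cinnerE adj0 mul0mx mxE. Qed.

Lemma CS n (u v : 'cV[C]_n) : sqn (cinner u v) <= vnorm2 u * vnorm2 v.
Proof.
have [A0|] := eqVneq (vnorm2 u) 0.
  by rewrite A0 mul0r (vnorm2_eq0 A0) cinner0l /sqn /= expr0n /= addr0.
move=> An0; have Ap : 0 < vnorm2 u by rewrite lt_def An0 vnorm2_ge0.
set c := cinner u v; set Av := vnorm2 u; set Bv := vnorm2 v.
set t := c / Av%:C.
have AC : Av%:C != 0 by rewrite (inj_eq (@complexI R)).
have E : (vnorm2 (v - t *: u))%:C = (Bv - sqn c / Av)%:C.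
  rewrite vnorm2E cinnerDl !cinnerNl !cinnerDr !cinnerNr !cinnerZl !cinnerZr.
  rewrite -!vnorm2E -/Av -/Bv [cinner v u]cinner_conj -/c.
  rewrite rcB rcM rcV sqnE /t cjM conjc_inv conjc_real.
  field; exact: AC.
have := vnorm2_ge0 _ (v - t *: u); move/complexI: E => ->.
by rewrite subr_ge0 ler_pdivrMr // mulrC.
Qed.

Lemma vnorm2_proj n (Q : 'M[C]_n) (s : 'cV[C]_n) :
  orth_proj R Q -> (vnorm2 (Q *m s))%:C = cinner s (Q *m s).
Proof. by case=> Ha Hq; rewrite vnorm2E cinner_mull Ha mulmxA Hq. Qed.

Lemma orth_proj_perp n (P : 'M[C]_n) : orth_proj R P -> orth_proj R (1%:M - P).
Proof.
case=> Ha Hq; split; first by rewrite adjD adjN adj1 Ha.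
by rewrite mulmxBl !mulmxBr !mul1mx mulmx1 Hq subrr subr0.
Qed.

Lemma pythagoras n (P : 'M[C]_n) (s : 'cV[C]_n) : orth_proj R P ->
  vnorm2 s = vnorm2 (P *m s) + vnorm2 ((1%:M - P) *m s).
Proof.
move=> HP; apply: complexI; rewrite rmorphD /= vnorm2_proj // vnorm2_proj;
  last exact: orth_proj_perp.
by rewrite vnorm2E mulmxBl mul1mx cinnerDr cinnerNr addrC subrK.
Qed.

Lemma unitary_norm n (U : 'M[C]_n) (s : 'cV[C]_n) : unitary R U ->
  vnorm2 (U *m s) = vnorm2 s.
Proof. by move=> HU; apply: complexI; rewrite !vnorm2E cinner_mull mulmxA HU mul1mx. Qed.

Lemma orth_proj_block m n (P : 'M[C]_m) (Q : 'M[C]_n) : orth_proj R P -> orth_proj R Q ->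
  orth_proj R (block_mx P 0 0 Q).
Proof.
case=> Pa Pq [Qa Qq]; split; first by rewrite adj_block !adj0 Pa Qa.
by rewrite mulmx_block !mulmx0 !mul0mx !addr0 add0r Pq Qq.
Qed.

Lemma orth_proj_tens m n (P : 'M[C]_m) (Q : 'M[C]_n) : orth_proj R P -> orth_proj R Q ->
  orth_proj R (P *t Q).
Proof.
case=> Pa Pq [Qa Qq]; split; first by rewrite adj_tens Pa Qa.
by rewrite tensmx_mul Pq Qq.
Qed.


Definition G {d} (P : 'M[C]_d) (s : nat -> 'cV[C]_d) : R :=
  sup [set r | exists (psi : 'cV[C]_d) (ns : nat -> nat),
         [/\ vnorm2 psi = 1, P *m psi = psi, {homo ns : i j / (i < j)%N} &
             r = inf [set sqn (cinner psi (s (ns i))) | i in setT]]].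

Lemma homo_ge (ns : nat -> nat) : {homo ns : i j / (i < j)%N} -> forall n, (n <= ns n)%N.
Proof.
move=> H; elim=> [|n IH] //; apply: leq_ltn_trans IH _; exact: H.
Qed.

Lemma eventually_ge (x : R) (u : nat -> R) :
  (forall eps, 0 < eps -> exists N, forall n, (N <= n)%N -> x <= u n + eps) ->
  (forall n, u n <= 0) -> x <= 0.
Proof.
move=> H u0; apply/ler_addgt0Pr => e e0; have [N HN] := H e e0.
by apply: le_trans (HN N (leqnn N)) _; rewrite lerD2r.
Qed.

Lemma freq_subseq (Q : nat -> Prop) : (forall N, exists n, (N <= n)%N /\ Q n) ->
  exists phi : nat -> nat, {homo phi : i j / (i < j)%N} /\ forall k, Q (phi k).
Proof.
move=> H; have [g Hg] := choice H.
pose phi k := iter k (fun m => g m.+1) (g 0%N).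
exists phi; split.
  apply: homo_ltn; first by move=> ? ? ?; apply: ltn_trans.
  by move=> i /=; have [H1 _] := Hg (phi i).+1.
by case=> [|k] /=; [case: (Hg 0%N) | case: (Hg (phi k).+1)].
Qed.

Lemma homo_sub {u : nat -> R} {l : R} {phi : nat -> nat} : {homo phi : i j / (i < j)%N} ->
  u @ \oo --> l -> (u \o phi) @ \oo --> l.
Proof.
move=> Hphi Hu; apply: cvg_comp Hu.
move=> A [N _ NA]; exists N => // n /= Nn; apply: NA.
exact: leq_trans Nn (homo_ge _ Hphi n).
Qed.

Lemma multi_bw {I : eqType} (r : seq I) (u : I -> nat -> R) :
  (forall k n, `|u k n| <= 1) ->
  exists phi : nat -> nat, {homo phi : i j / (i < j)%N} /\
    forall k, k \in r -> cvgn (u k \o phi).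
Proof.
move=> Hb; elim: r => [|k r [phi [Hphi IH]]].
  by exists id; split.
have Hbd : bounded_fun (u k \o phi).
  exists 1; split; first by rewrite num_real.
  by move=> M M1 n _ /=; apply: le_trans (Hb _ _) (ltW M1).
have [psi Hpsi Hc] := bolzano_weierstrass Hbd.
have Hpsi' : {homo psi : i j / (i < j)%N}.
  by move=> i j; rewrite !ltnNge -!leEnat Hpsi.
exists (phi \o psi); split.
  by move=> i j ij; apply: Hphi; apply: Hpsi'.
move=> k'; rewrite in_cons => /orP [/eqP -> //|kr].
have := IH k' kr; move=> /cvg_ex [l Hl].
by apply/cvg_ex; exists l; apply: (homo_sub Hpsi' Hl).
Qed.

Lemma cvg_sumR (I : Type) (r : seq I) (u : I -> nat -> R) (l : I -> R) :
  (forall i, u i @ \oo --> l i) ->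
  (fun n => \sum_(i <- r) u i n) @ \oo --> \sum_(i <- r) l i.
Proof.
move=> H; elim: r => [|i r IH].
  rewrite big_nil; under eq_fun do rewrite big_nil; exact: cvg_cst.
rewrite big_cons; under eq_fun do rewrite big_cons.
exact: cvgD (H i) IH.
Qed.

Lemma vnorm2Z n (c : C) (v : 'cV[C]_n) : vnorm2 (c *: v) = sqn c * vnorm2 v.
Proof. by rewrite /vnorm2 mulr_sumr; apply: eq_bigr => j _; rewrite mxE sqnM. Qed.

Lemma sqn_le_vnorm2 n (v : 'cV[C]_n) j : sqn (v j 0) <= vnorm2 v.
Proof.
rewrite /vnorm2 (bigD1 j) //= lerDl; apply: sumr_ge0 => i _; exact: sqn_ge0.
Qed.

Lemma ReD (x y : C) : complex.Re (x + y) = complex.Re x + complex.Re y.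
Proof. by case: x => a b; case: y. Qed.

Lemma Re_cinner n (u v : 'cV[C]_n) : complex.Re (cinner u v) =
  \sum_j (complex.Re (u j 0) * complex.Re (v j 0) + complex.Im (u j 0) * complex.Im (v j 0)).
Proof.
rewrite /cinner; elim/big_rec2: _ => [//|j y1 y2 _ <-].
rewrite ReD; congr (_ + _).
by case: (u j 0) => a b; case: (v j 0) => c e; rewrite /cconj /=; simpc => /=; ring.
Qed.

Lemma sq_bound (p q : R) : p ^+ 2 + q ^+ 2 <= 1 -> -1 <= p <= 1 /\ -1 <= q <= 1.
Proof.
move=> H; have Hp : p ^+ 2 <= 1 by apply: le_trans H; rewrite lerDl sqr_ge0.
have Hq : q ^+ 2 <= 1 by apply: le_trans H; rewrite lerDr sqr_ge0.
by split; apply/andP; split; nra.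
Qed.

Lemma cvg_sq (a : nat -> R) (la : R) : a @ \oo --> la -> (fun k => a k ^+ 2) @ \oo --> la ^+ 2.
Proof. move=> Hcv; have := cvgM Hcv Hcv; exact. Qed.

Section Core.
Variables (d : nat) (P : 'M[C]_d) (s : nat -> 'cV[C]_d).
Hypothesis HP : orth_proj R P.
Hypothesis Hs : forall n, vnorm2 (s n) = 1.
Let f n := vnorm2 (P *m s n).
Let T := [set r | exists (psi : 'cV[C]_d) (ns : nat -> nat),
         [/\ vnorm2 psi = 1, P *m psi = psi, {homo ns : i j / (i < j)%N} &
             r = inf [set sqn (cinner psi (s (ns i))) | i in setT]]].

Lemma f_ge0 n : 0 <= f n.
Proof. exact: vnorm2_ge0. Qed.

Lemma f_le1 n : f n <= 1.
Proof.
rewrite -(Hs n) (pythagoras _ _ (s n) HP) /f lerDl; exact: vnorm2_ge0.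
Qed.

Lemma elem_le_f psi n : vnorm2 psi = 1 -> P *m psi = psi ->
  sqn (cinner psi (s n)) <= f n.
Proof.
move=> H1 HPp; case: HP => Ha _.
rewrite -HPp cinner_mull Ha.
by apply: le_trans (CS _ psi (P *m s n)) _; rewrite H1 mul1r.
Qed.

Lemma inf_bounds psi (ns : nat -> nat) : vnorm2 psi = 1 -> P *m psi = psi ->
  let r := inf [set sqn (cinner psi (s (ns i))) | i in setT] in
  0 <= r /\ forall i, r <= f (ns i).
Proof.
move=> H1 HPp r; split.
  apply: lb_le_inf; first by exists (sqn (cinner psi (s (ns 0%N)))), 0%N.
  by move=> y [i _ <-]; apply: sqn_ge0.
move=> i; apply: le_trans (elem_le_f _ (ns i) H1 HPp).
apply: ge_inf; last by exists i.
by exists 0 => y [j _ <-]; apply: sqn_ge0.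
Qed.

Lemma T_ub : has_ubound T.
Proof.
exists 1 => r [psi [ns [H1 HPp Hns ->]]].
have [_ /(_ 0%N) H] := inf_bounds _ ns H1 HPp.
exact: le_trans H (f_le1 _).
Qed.

Lemma G_ge0 : 0 <= G P s.
Proof.
rewrite /G -/T.
have [[r Tr]|T0] := pselect (exists r, T r).
  apply: le_trans (ub_le_sup T_ub Tr).
  by case: Tr => psi [ns [H1 HPp _ ->]]; case: (inf_bounds _ ns H1 HPp).
have -> : T = set0 by apply/seteqP; split => x // Tx; exfalso; apply: T0; exists x.
by rewrite sup0.
Qed.

Lemma G_le y : (forall eps, 0 < eps -> exists N, forall n, (N <= n)%N -> f n <= y + eps) ->
  G P s <= y.
Proof.
move=> H; rewrite /G -/T.
have [[r0 Tr0]|T0] := pselect (exists r, T r); last first.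
  have -> : T = set0 by apply/seteqP; split => x // Tx; exfalso; apply: T0; exists x.
  rewrite sup0; apply/ler_addgt0Pr => e e0; have [N HN] := H e e0.
  exact: le_trans (f_ge0 N) (HN N (leqnn N)).
apply: ge_sup; first by exists r0.
move=> r [psi [ns [H1 HPp Hns ->]]].
have [_ Hi] := inf_bounds _ ns H1 HPp.
apply/ler_addgt0Pr => e e0; have [N HN] := H e e0.
apply: le_trans (Hi N) _; apply: HN; exact: homo_ge.
Qed.

Lemma G_ge x : (forall N, exists n, (N <= n)%N /\ x <= f n) -> x <= G P s.
Proof.
move=> H; case: (HP) => Ha Hq.
have [phi0 [Hphi0 Hx]] := freq_subseq _ H.
pose u (jb : 'I_d * bool) k := let w := (P *m s (phi0 k)) jb.1 0 in
  if jb.2 then complex.Re w else complex.Im w.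
have Hb : forall jb k, `|u jb k| <= 1.
  move=> [j b] k.
  have Hle : sqn ((P *m s (phi0 k)) j 0) <= 1 :=
    le_trans (sqn_le_vnorm2 _ _ j) (f_le1 _).
  move: Hle; rewrite /u /sqn /=.
  move: (complex.Re _) (complex.Im _) => p q Hpq.
  have [H1 H2] := sq_bound _ _ Hpq.
  by case: b; rewrite ler_norml.
have [phi [Hphi Hc]] := multi_bw (enum {: 'I_d * bool}) u Hb.
pose lr j := lim ((u (j, true) \o phi) @ \oo).
pose li j := lim ((u (j, false) \o phi) @ \oo).
have Hr j : (u (j, true) \o phi) @ \oo --> lr j by exact: Hc _ (mem_enum _ _).
have Hi j : (u (j, false) \o phi) @ \oo --> li j by exact: Hc _ (mem_enum _ _).
pose idx := phi0 \o phi.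
have Hidx : {homo idx : i j / (i < j)%N} by move=> i j ij; apply: Hphi0; apply: Hphi.
pose v : 'cV[C]_d := \col_j (lr j +i* li j).
have Hf : (fun k => f (idx k)) @ \oo --> vnorm2 v.
  have -> : vnorm2 v = \sum_j (lr j ^+ 2 + li j ^+ 2).
    by rewrite /vnorm2; apply: eq_bigr => j _; rewrite mxE.
  have -> : (fun k => f (idx k)) = fun k =>
      \sum_j ((u (j, true) \o phi) k ^+ 2 + (u (j, false) \o phi) k ^+ 2) by [].
  apply: cvg_sumR => j; apply: cvgD; apply: cvg_sq; [exact: Hr | exact: Hi].
have HxV : x <= vnorm2 v.
  rewrite leNgt; apply/negP => HV.
  have [N _ HN] := cvgr_lt (vnorm2 v) Hf x HV.
  by have := HN N (leqnn N); rewrite ltNge Hx.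
set V := vnorm2 v in Hf HxV.
have [V0|V0] := eqVneq V 0.
  by apply: le_trans (G_ge0) ; rewrite -V0.
have Vp : 0 < V by rewrite lt_def V0 vnorm2_ge0.
pose g k := complex.Re (cinner v (P *m s (idx k))).
have Hg : g @ \oo --> V.
  have -> : V = \sum_j (lr j * lr j + li j * li j).
    by rewrite /V /vnorm2; apply: eq_bigr => j _; rewrite mxE /sqn /= !expr2.
  have -> : g = fun k => \sum_j (lr j * (u (j, true) \o phi) k + li j * (u (j, false) \o phi) k).
    by apply/funext => k; rewrite /g Re_cinner; apply: eq_bigr => j _; rewrite mxE.
  apply: cvg_sumR => j; apply: cvgD; apply: cvgM; [exact: cvg_cst | exact: Hr | exact: cvg_cst | exact: Hi].
have HgP k : g k = complex.Re (cinner (P *m v) (s (idx k))) by rewrite /g cinner_mull Ha.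
pose Nn := vnorm2 (P *m v).
have Npos : 0 < Nn.
  rewrite lt_def vnorm2_ge0 andbT; apply/eqP => N0.
  have Pv0 := vnorm2_eq0 N0.
  have [K _ HK] := cvgr_gt V Hg 0 Vp.
  by have := HK K (leqnn K); rewrite /= HgP Pv0 cinner0l /= ltxx.
have NleV : Nn <= V by rewrite /V (pythagoras _ _ v HP) lerDl vnorm2_ge0.
pose c : C := ((Num.sqrt Nn)^-1)%:C.
pose psi := c *: (P *m v).
have Hpsi1 : vnorm2 psi = 1.
  rewrite /psi vnorm2Z sqn_real exprVn (sqr_sqrtr (ltW Npos)) mulVf //.
  by rewrite gt_eqF.
have HPpsi : P *m psi = psi by rewrite /psi scalemxAr mulmxA Hq.
have Hel k : g k ^+ 2 / V <= sqn (cinner psi (s (idx k))).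
  rewrite /psi cinnerZl sqnM sqn_conj sqn_real exprVn (sqr_sqrtr (ltW Npos)) HgP.
  set z := cinner (P *m v) (s (idx k)).
  rewrite mulrC; apply: (@le_trans _ _ (Nn^-1 * complex.Re z ^+ 2)).
    apply: ler_wpM2r; first exact: sqr_ge0.
    by rewrite lef_pV2 ?posrE.
  apply: ler_wpM2l; first by rewrite invr_ge0 ltW.
  exact: Re_sq_le.
have Hh : (fun k => g k ^+ 2 / V) @ \oo --> V.
  have H0 := cvgM (cvg_sq _ _ Hg) (@cvg_cst _ (V^-1 : R) nat \oo _).
  have E : V ^+ 2 / V = V by rewrite expr2 mulfK // gt_eqF.
  rewrite E in H0; exact: H0.
apply/ler_addgt0Pr => e e0.
have Ve : V - e < V by rewrite ltrBlDr ltrDl.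
have [K _ HK] := cvgr_ge V Hh (V - e) Ve.
pose ns i := idx (K + i)%N.
have Hns : {homo ns : i j / (i < j)%N} by move=> i j ij; apply: Hidx; rewrite ltn_add2l.
pose r := inf [set sqn (cinner psi (s (ns i))) | i in setT].
have Tr : T r by exists psi, ns.
have Hr' : V - e <= r.
  apply: lb_le_inf; first by exists (sqn (cinner psi (s (ns 0%N)))), 0%N.
  move=> y [i _ <-]; apply: le_trans (HK (K + i)%N (leq_addr _ _)) (Hel _).
have Hsup : r <= G P s by rewrite /G -/T; apply: (ub_le_sup T_ub Tr).
lra.
Qed.

End Core.



Definition isND (f : nat -> R) (X : R) :=
  [/\ forall n, 0 <= f n <= 1,
      forall y, (forall e, 0 < e -> exists N, forall n, (N <= n)%N -> f n <= y + e) -> X <= y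
    & forall x, (forall N, exists n, (N <= n)%N /\ x <= f n) -> x <= X].

Lemma G_isND d (P : 'M[C]_d) (s : nat -> 'cV[C]_d) : orth_proj R P ->
  (forall n, vnorm2 (s n) = 1) -> isND (fun n => vnorm2 (P *m s n)) (G P s).
Proof.
move=> HP Hs; split.
- by move=> n; rewrite f_ge0 f_le1.
- exact: G_le.
- exact: G_ge.
Qed.

Section ND.
Variables (f : nat -> R) (X : R).
Hypothesis H : isND f X.

Lemma ND_ev e : 0 < e -> exists N, forall n, (N <= n)%N -> f n <= X + e.
Proof.
move=> e0; case: H => _ Hle Hge.
have [//|Hn] := pselect (exists N, forall n, (N <= n)%N -> f n <= X + e).
have : X + e <= X.
  apply: Hge => N.
  have /existsNP [n /not_implyP [Nn /negP]] : ~ forall n, (N <= n)%N -> f n <= X + e.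
    by move=> Hc; apply: Hn; exists N.
  by rewrite -ltNge => /ltW Hl; exists n.
by rewrite gerDl leNgt e0.
Qed.

Lemma ND_fr e : 0 < e -> forall N, exists n, (N <= n)%N /\ X - e <= f n.
Proof.
move=> e0 N; case: H => _ Hle Hge.
have [//|Hn] := pselect (exists n, (N <= n)%N /\ X - e <= f n).
have : X <= X - e.
  apply: Hle => e' e'0; exists N => n Nn.
  have /forallNP Hn' := Hn.
  have := Hn' n; move/not_andP => [//|/negP]; rewrite -ltNge => Hl.
  by apply: ltW; apply: lt_le_trans Hl _; rewrite lerDl ltW.
by move=> h; exfalso; lra.
Qed.

Lemma ND_ge0 : 0 <= X.
Proof.
case: H => Hb _ Hge; apply: Hge => N; exists N; split => //.
by case/andP: (Hb N).
Qed.

Lemma ND_le1 : X <= 1.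
Proof.
case: H => Hb Hle _; apply: Hle => e e0; exists 0%N => n _.
by case/andP: (Hb n) => _ h; apply: le_trans h _; rewrite lerDl ltW.
Qed.

Lemma ND_lim l : f @ \oo --> l -> X = l.
Proof.
move=> /cvgrPdist_le Hl; case: H => _ Hle Hge.
apply/eqP; rewrite eq_le; apply/andP; split.
  apply: Hle => e e0; have [N _ HN] := Hl e e0; exists N => n Nn.
  by have := HN n Nn; rewrite ler_distl lerBlDr => /andP [].
apply/ler_addgt0Pr => e e0.
rewrite -lerBlDr; apply: Hge => N.
have [N' _ HN] := Hl e e0; exists (maxn N N'); split; first exact: leq_maxl.
by have := HN _ (leq_maxr N N'); rewrite ler_distl !lerBlDr => /andP [].
Qed.

End ND.
Arguments ND_ev {f X}.
Arguments ND_fr {f X}.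
Arguments ND_ge0 {f X}.
Arguments ND_le1 {f X}.
Arguments ND_lim {f X}.


Lemma ND_dsum fa fb (X Y Z p q : R) : isND fa X -> isND fb Y ->
  isND (fun n => p * fa n + q * fb n) Z -> 0 <= p -> 0 <= q -> p + q = 1 ->
  [/\ Z <= p * X + q * Y, Num.max (p * X) (q * Y) <= Z &
      Z / 2 <= Num.max (p * X) (q * Y)].
Proof.
move=> HA HB HZ hp hq hpq.
have Z1 : Z <= p * X + q * Y.
  case: (HZ) => _ Hle _; apply: Hle => e e0.
  have [N1 H1] := ND_ev HA _ e0; have [N2 H2] := ND_ev HB _ e0.
  exists (maxn N1 N2) => n Nn.
  have h1 := ler_wpM2l hp (H1 n (leq_trans (leq_maxl _ _) Nn)).
  have h2 := ler_wpM2l hq (H2 n (leq_trans (leq_maxr _ _) Nn)).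
  have h3 : e * p + e * q = e by rewrite -mulrDr hpq mulr1.
  lra.
have hpq' : p <= 1 /\ q <= 1 by split; lra.
have Z2 : Num.max (p * X) (q * Y) <= Z.
  case: (HZ) => Hb _ Hge; rewrite ge_max; apply/andP; split;
    apply/ler_addgt0Pr => e e0; rewrite -lerBlDr; apply: Hge => N.
    have [n [Nn hn]] := ND_fr HA _ e0 N; exists n; split => //.
    have h1 := ler_wpM2l hp hn.
    have h2 : 0 <= q * fb n by apply: mulr_ge0 => //; case: HB => /(_ n) /andP [].
    have h3 : 0 <= q * e by apply: mulr_ge0 => //; apply: ltW.
    have h4 : e * p + e * q = e by rewrite -mulrDr hpq mulr1.
    lra.
  have [n [Nn hn]] := ND_fr HB _ e0 N; exists n; split => //.
  have h1 := ler_wpM2l hq hn.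
  have h2 : 0 <= p * fa n by apply: mulr_ge0 => //; case: HA => /(_ n) /andP [].
  have h3 : 0 <= p * e by apply: mulr_ge0 => //; apply: ltW.
  have h4 : e * p + e * q = e by rewrite -mulrDr hpq mulr1.
  lra.
split => //.
have m1 : p * X <= Num.max (p * X) (q * Y) by rewrite le_max lexx.
have m2 : q * Y <= Num.max (p * X) (q * Y) by rewrite le_max lexx orbT.
lra.
Qed.

Lemma ND_tens fa fb (X Y Z : R) : isND fa X -> isND fb Y ->
  isND (fun n => fa n * fb n) Z -> Z <= X * Y.
Proof.
move=> HA HB HZ; case: (HZ) => _ Hle _; apply: Hle => e e0.
pose dl := Num.min 1 (e / 3).
have hd0 : 0 < dl by rewrite lt_min ltr01 divr_gt0.
have hd1 : dl <= 1 by rewrite ge_min lexx.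
have hd2 : dl <= e / 3 by rewrite ge_min lexx orbT.
have [N1 H1] := ND_ev HA _ hd0; have [N2 H2] := ND_ev HB _ hd0.
exists (maxn N1 N2) => n Nn.
have h1 := H1 n (leq_trans (leq_maxl _ _) Nn).
have h2 := H2 n (leq_trans (leq_maxr _ _) Nn).
have X0 := ND_ge0 HA; have Y0 := ND_ge0 HB.
have X1 := ND_le1 HA; have Y1 := ND_le1 HB.
have /andP [a0 _] : 0 <= fa n <= 1 by case: HA => /(_ n).
have /andP [b0 _] : 0 <= fb n <= 1 by case: HB => /(_ n).
have h3 : fa n * fb n <= (X + dl) * (Y + dl) by apply: ler_pM.
have hX : dl * X <= dl by rewrite -[leRHS]mulr1; apply: ler_wpM2l => //; apply: ltW.
have hY : dl * Y <= dl by rewrite -[leRHS]mulr1; apply: ler_wpM2l => //; apply: ltW.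
have hD : dl * dl <= dl by rewrite -[leRHS]mulr1; apply: ler_wpM2l => //; apply: ltW.
lra.
Qed.

Lemma ND_perp f (X W : R) : isND f X -> isND (fun n => 1 - f n) W ->
  1 <= X + W /\ (X + W = 1 <-> exists l : R, f @ \oo --> l).
Proof.
move=> HA HW; split.
  rewrite -lerBlDl; apply/ler_addgt0Pr => e e0; rewrite -lerBlDr.
  case: (HW) => _ _ Hge; apply: Hge => N.
  have [N0 H0] := ND_ev HA _ e0.
  exists (maxn N N0); split; first exact: leq_maxl.
  have := H0 _ (leq_maxr N N0); lra.
split.
  move=> hXW; exists X; apply/cvgrPdist_le => e e0.
  have [N1 H1] := ND_ev HA _ e0; have [N2 H2] := ND_ev HW _ e0.
  exists (maxn N1 N2) => // n /= Nn.
  have h1 := H1 n (leq_trans (leq_maxl _ _) Nn).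
  have h2 := H2 n (leq_trans (leq_maxr _ _) Nn).
  rewrite ler_distl; apply/andP; split; lra.
move=> [l Hl].
have -> := ND_lim HA _ Hl.
have -> := ND_lim HW _ (cvgB (cvg_cst (1 : R)) Hl).
lra.
Qed.

End Scal.
Arguments isND {R}.
Arguments G_isND {R d P s}.
Arguments orth_proj_block {R m n P Q}.
Arguments orth_proj_tens {R m n P Q}.
Arguments orth_proj_perp {R n P}.
Arguments pythagoras {R n P}.
Arguments ND_dsum {R fa fb X Y Z p q}.
Arguments ND_tens {R fa fb X Y Z}.
Arguments ND_perp {R f X W}.
Arguments sqn_ge0 {R}.

Section Glue.
Variables (R : realType) (S : finType).
Local Notation C := R[i].

Lemma run_word_cons (A : qaut R S) s x v : run_word R A (s :: x) v = run_word R A x (qU A s *m v).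
Proof. by []. Qed.

Lemma run_word_norm (A : qaut R S) x v : (forall s, unitary R (qU A s)) ->
  vnorm2 (run_word R A x v) = vnorm2 v.
Proof.
move=> HU; elim: x v => [//|s x IH] v.
by rewrite run_word_cons IH unitary_norm.
Qed.

Lemma run_word_scale (A : qaut R S) x c v : run_word R A x (c *: v) = c *: run_word R A x v.
Proof. by elim: x v => [//|s x IH] v; rewrite !run_word_cons -scalemxAr IH. Qed.

Lemma run_word_dsum a b (A B : qaut R S) x u v :
  run_word R (qdsum a b A B) x (col_mx u v) = col_mx (run_word R A x u) (run_word R B x v).
Proof.
elim: x u v => [//|s x IH] u v; rewrite !run_word_cons -IH; congr run_word.
by rewrite /= mul_block_col !mul0mx addr0 add0r.
Qed.

Lemma run_word_tens (A B : qaut R S) x (u : 'cV[C]_(qdim A)) (v : 'cV[C]_(qdim B)) :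
  run_word R (qtens A B) x (u *t v) = run_word R A x u *t run_word R B x v.
Proof.
elim: x u v => [//|s x IH] u v; rewrite !run_word_cons -IH; congr run_word.
exact: (@tensmx_mul _ _ _ _ _ 1 1 (qU A s) (qU B s) u v).
Qed.

Lemma vnorm2_col m n (u : 'cV[C]_m) (v : 'cV[C]_n) : vnorm2 (col_mx u v) = vnorm2 u + vnorm2 v.
Proof.
rewrite /vnorm2 big_split_ord; congr (_ + _); apply: eq_bigr => i _.
  by rewrite col_mxEu.
by rewrite col_mxEd.
Qed.

Lemma vnorm2_tens m n (u : 'cV[C]_m) (v : 'cV[C]_n) : vnorm2 (u *t v) = vnorm2 u * vnorm2 v.
Proof.
rewrite /vnorm2 mulr_sum; apply: eq_bigr => i _; rewrite mxE sqnM.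
by rewrite !(ord1 (mxtens_unindex _).1) !(ord1 (mxtens_unindex _).2).
Qed.

End Glue.
Arguments run_word_tens {R S A B}.

Local Close Scope complex_scope.

Theorem proposition3 (R : realType) (S : finType) (A B : qaut R S) (a b : R[i]) :
  is_qaut A -> is_qaut B -> sqn a + sqn b = 1 ->
  forall w : nat -> S,
    (* (1) *)
    [/\ sqn a * fND A w + sqn b * fND B w >= fND (qdsum a b A B) w,
        fND (qdsum a b A B) w >= Num.max (sqn a * fND A w) (sqn b * fND B w) &
        Num.max (sqn a * fND A w) (sqn b * fND B w) >= fND (qdsum a b A B) w / 2]
    (* (2) *)
    /\ fND (qtens A B) w <= fND A w * fND B w
    (* (3) *)
    /\ (fND A w + fND (qperp A) w >= 1 /\
        (fND A w + fND (qperp A) w = 1 <->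
           exists l : R, (fun n => fMO A (wprefix w n)) @ \oo --> l)).
Proof.
move=> [A0 [AU AP]] [B0 [BU BP]] hab w.
have HsA n : vnorm2 (ndstate R A w n) = 1 by rewrite /ndstate run_word_norm.
have HsB n : vnorm2 (ndstate R B w n) = 1 by rewrite /ndstate run_word_norm.
have HA : isND (fun n => fMO A (wprefix w n)) (fND A w) :=
  G_isND AP HsA.
have HB : isND (fun n => fMO B (wprefix w n)) (fND B w) :=
  G_isND BP HsB.
have DP : orth_proj R (qP (qdsum a b A B)) := orth_proj_block AP BP.
have ED n : ndstate R (qdsum a b A B) w n =
    col_mx (a *: ndstate R A w n) (b *: ndstate R B w n).
  by rewrite /ndstate -!run_word_scale -run_word_dsum.
have HsD n : vnorm2 (ndstate R (qdsum a b A B) w n) = 1.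
  by rewrite ED vnorm2_col !vnorm2Z HsA HsB !mulr1.
have HD0 := G_isND DP HsD.
have HD : isND (fun n => sqn a * fMO A (wprefix w n) + sqn b * fMO B (wprefix w n))
    (fND (qdsum a b A B) w).
  move: HD0; congr isND; apply/funext => n.
  rewrite ED /= mul_block_col !mul0mx addr0 add0r vnorm2_col -!scalemxAr !vnorm2Z.
  by [].
have [d1 d2 d3] := ND_dsum HA HB HD (sqn_ge0 a) (sqn_ge0 b) hab.
have TP : orth_proj R (qP (qtens A B)) := orth_proj_tens AP BP.
have ET n : ndstate R (qtens A B) w n = ndstate R A w n *t ndstate R B w n :=
  run_word_tens _ _ _.
have HsT n : vnorm2 (ndstate R (qtens A B) w n) = 1.
  by rewrite ET vnorm2_tens HsA HsB mulr1.
have HT0 := G_isND TP HsT.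
have HT : isND (fun n => fMO A (wprefix w n) * fMO B (wprefix w n)) (fND (qtens A B) w).
  move: HT0; congr isND; apply/funext => n.
  rewrite ET /=.
  rewrite (@tensmx_mul _ _ _ _ _ 1 1 (qP A) (qP B) (ndstate R A w n) (ndstate R B w n)).
  by rewrite vnorm2_tens.
have t1 := ND_tens HA HB HT.
have PP : orth_proj R (qP (qperp A)) := orth_proj_perp AP.
have HP0 := @G_isND R _ _ (ndstate R A w) PP HsA.
have HP : isND (fun n => 1 - fMO A (wprefix w n)) (fND (qperp A) w).
  move: HP0; congr isND; apply/funext => n.
  have E := pythagoras (ndstate R A w n) AP; rewrite HsA in E.
  change (fMO A (wprefix w n)) with (vnorm2 (qP A *m ndstate R A w n)).
  rewrite E [X in _ = X - _]addrC addrK; by [].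
have p1 := ND_perp HA HP.
by split; [split | split].
Qed.
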